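(* Let $X$ be a finite simplicial complex. Then $\partial_J\circ\partial_J=0$ on $\widehat{C}(X)$; hence $(\widehat{C}(X),\partial_J)$ is a chain complex, with $\partial_J$ of bidegree $(-1,0)$.
   Context: Let $X$ be a finite simplicial complex. Its face poset $\mathcal{F}(X)$ is the directed graph whose vertices are the nonempty simplices of $X$, with a directed edge $\sigma\to\tau$ iff $\tau$ is a codimension-one face of $\sigma$. A matching on $\mathcal{F}(X)$ is a set $m$ of edges of $\mathcal{F}(X)$, no two sharing an endpoint. Given a matching $m$, let $\mathcal{F}_m(X)$ be the directed graph obtained from $\mathcal{F}(X)$ by reversing every edge in $m$; a directed cycle of $\mathcal{F}_m(X)$ (closed directed path without repeated vertices) is supported by $m$, and $J(m)$ is the number of directed cycles supported by $m$. The matching complex $\mathrm{M}(X)$ has vertex set the edges of $\mathcal{F}(X)$ and simplices the nonempty matchings; $m_\sigma$ denotes the matching of a simplex $\sigma$. Let $\widehat{C}_i^j(X)$ be the $\mathbb{F}_2$-vector space with basis the $i$-dimensional simplices $\sigma$ of $\mathrm{M}(X)$ (matchings with $i+1$ edges) with $J(m_\sigma)=j$, and $\widehat{C}(X)=\bigoplus_{i,j\ge0}\widehat{C}_i^j(X)$. The simplicial boundary $\partial$ sends $\sigma$ to the mod-2 sum of its codimension-one faces (and sends $0$-simplices to $0$). Define $\partial_J(\sigma)$ as the sum of those codimension-one faces $\tau$ of $\sigma$ with $J(m_\tau)=J(m_\sigma)$, and $\partial_d=\partial-\partial_J$ (the sum of faces $\tau$ with $J(m_\tau)<J(m_\sigma)$).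 *)

(* Defs.v *)
From HB Require Import structures.
From mathcomp Require Import all_boot all_order all_algebra.
Set Implicit Arguments. Unset Strict Implicit. Unset Printing Implicit Defensive.
Import GRing.Theory.
Local Open Scope ring_scope.

Section MatchingComplex.
Variable V : finType.

(* Simplices of X are nonempty finite subsets of V. *)
Definition simplex := {set V}.
(* Potential edges of the face poset: (sigma, tau) meaning sigma -> tau. *)
Definition fedge := (simplex * simplex)%type.

Definition is_complex (K : {set simplex}) : bool :=
  (set0 \notin K) &&
  [forall s in K, forall t : simplex, ((t \subset s) && (t != set0)) ==> (t \in K)].

Definition face_edge (K : {set simplex}) (e : fedge) : bool :=
  [&& e.1 \in K, e.2 \in K, e.2 \subset e.1 & #|e.1| == #|e.2|.+1].

Definition share_endpoint (e f : fedge) : bool :=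
  [|| e.1 == f.1, e.1 == f.2, e.2 == f.1 | e.2 == f.2].

Definition is_matching (K : {set simplex}) (m : {set fedge}) : bool :=
  [forall e in m, face_edge K e] &&
  [forall e in m, forall f in m, (e != f) ==> ~~ share_endpoint e f].

Definition arc (K : {set simplex}) (m : {set fedge}) (x y : simplex) : bool :=
  (face_edge K (x, y) && ((x, y) \notin m)) || (face_edge K (y, x) && ((y, x) \in m)).

Definition cyc_arcs (p : seq simplex) : {set fedge} :=
  [set e | e \in zip p (rot 1 p)].

(* A vertex list without repetitions has length at
   most #|simplex|, so the existential is over a finite type. Cycles are
   identified up to rotation via their arc sets. *)
Definition is_dcycle (K : {set simplex}) (m : {set fedge}) (C : {set fedge}) : bool :=
  [exists n : 'I_(#|{: simplex}|).+1, exists t : n.-tuple simplex,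
     [&& (0 < n)%N, uniq t, cycle (arc K m) t & C == cyc_arcs t]].

Definition J (K : {set simplex}) (m : {set fedge}) : nat :=
  #|[set C : {set fedge} | is_dcycle K m C]|.

(* Chains: F_2-linear combinations of simplices of M(X) (nonempty matchings),
   represented by their coefficient functions. *)
Definition chain := {ffun {set fedge} -> 'F_2}.

Definition msimplex (K : {set simplex}) (s : {set fedge}) : bool :=
  is_matching K s && (s != set0).

Definition in_Chat (K : {set simplex}) (c : chain) : Prop :=
  forall s, c s != 0 -> msimplex K s.

Definition in_Cij (K : {set simplex}) (i j : nat) (c : chain) : Prop :=
  forall s, c s != 0 -> [&& msimplex K s, #|s| == i.+1 & J K s == j].

Definition codim1_face (K : {set simplex}) (t s : {set fedge}) : bool :=
  [&& msimplex K s, msimplex K t, t \subset s & #|s| == #|t|.+1].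

Definition dJ (K : {set simplex}) (c : chain) : chain :=
  [ffun t => \sum_(s : {set fedge} | codim1_face K t s && (J K t == J K s)) c s].

End MatchingComplex.

(* Main.v *)
Require Import Defs.
From HB Require Import structures.
From mathcomp Require Import all_boot all_order all_algebra.
From mathcomp Require Import zify.
Import GRing.Theory.
Local Open Scope ring_scope.

Lemma cycle_nthP {T : Type} (x0 : T) (e : rel T) (p : seq T) :
  reflect (forall i, (i < size p)%N -> e (nth x0 p i) (nth x0 p (i.+1 %% size p)))
          (cycle e p).
Proof.
case: p => [|x q]; first by apply: (iffP idP) => // _ i; rewrite ltn0.
rewrite /= -/(size (x :: q)).
apply: (iffP (pathP x0)) => H i Hi.
- have Hi' : (i < size (rcons q x))%N by rewrite size_rcons.
  have := H i Hi'. rewrite -rcons_cons nth_rcons /= Hi nth_rcons.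
  have [lt|ge] := ltnP i (size q).
  + by rewrite ?lt modn_small.
  + have eq : i = size q by apply/eqP; rewrite eqn_leq ge -ltnS Hi.
    by rewrite eq ?ltnn eqxx modnn.
- rewrite size_rcons in Hi.
  have := H i Hi. rewrite -rcons_cons nth_rcons /= Hi nth_rcons.
  have [lt|ge] := ltnP i (size q).
  + by rewrite ?lt modn_small.
  + have eq : i = size q by apply/eqP; rewrite eqn_leq ge -ltnS Hi.
    by rewrite eq ?ltnn eqxx modnn.
Qed.

Section Proofs.
Variable V : finType.
Variable K : {set {set V}}.

Lemma sub_matching {m m' : {set fedge V}} :
  is_matching K m -> m' \subset m -> is_matching K m'.
Proof.
move=> /andP[/forall_inP H1 /forall_inP H2] sub.
apply/andP; split; apply/forall_inP => e em'.
  by apply: H1; apply: (subsetP sub).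
apply/forall_inP => f fm'.
exact: (forall_inP (H2 e (subsetP sub _ em')) f (subsetP sub _ fm')).
Qed.

Lemma match_no_share {m : {set fedge V}} {e f} :
  is_matching K m -> e \in m -> f \in m -> share_endpoint e f -> e = f.
Proof.
move=> /andP[_ /forall_inP H] em fm sh.
apply/eqP; move: sh; apply: contraLR => ne.
exact: (implyP (forall_inP (H e em) f fm) ne).
Qed.

Lemma face_card {x y : simplex V} : face_edge K (x, y) -> #|x| = #|y|.+1.
Proof. by case/and4P => _ _ _ /eqP. Qed.

Lemma cycle_cover (m : {set fedge V}) (p : seq (simplex V)) (x0 : simplex V) :
  is_matching K m -> cycle (Defs.arc K m) p ->
  forall i : 'I_(size p),
    face_edge K (nth x0 p i, nth x0 p (ordS i)) ->
    (nth x0 p i, nth x0 p (ordS i)) \notin m ->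
    (nth x0 p (ordS (ordS i)), nth x0 p (ordS i)) \in m.
Proof.
move=> Hm /cycle_nthP cy.
set f := fun i : 'I_(size p) => nth x0 p i.
have H : forall i : 'I_(size p), Defs.arc K m (f i) (f (ordS i)).
  by move=> i; exact: (cy x0 i (ltn_ord i)).
pose A i := face_edge K (f i, f (ordS i)) && ((f i, f (ordS i)) \notin m).
pose B i := face_edge K (f (ordS i), f i) && ((f (ordS i), f i) \in m).
have hAB : forall i, A i || B i by move=> i; exact: H i.
have hcard : forall i, (#|f (ordS i)| + A i = #|f i| + B i)%N.
  move=> i; have := hAB i; rewrite /A /B.
  case: (boolP (face_edge K (f i, f (ordS i)))) => fe1;
  case: (boolP (face_edge K (f (ordS i), f i))) => fe2 /=.
  - by move: (face_card fe1) (face_card fe2); lia.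
  - by rewrite orbF => ->; move: (face_card fe1); lia.
  - by move=> ->; move: (face_card fe2); lia.
  - by [].
have hsum : (\sum_i (A i : nat) = \sum_i (B i : nat))%N.
  have : (\sum_i (#|f (ordS i)| + A i) = \sum_i (#|f i| + B i))%N.
    by apply: eq_bigr => i _; exact: hcard.
  rewrite !big_split /= [X in (_ = X + _)%N](reindex_inj (@ordS_inj _)) /=.
  by move/eqP; rewrite eqn_add2l => /eqP.
have hBA : forall i, B (ordS i) -> A i.
  move=> i hB; have := hAB i; case/orP => // hBi.
  move: hB hBi; rewrite /B => /andP[fe1 m1] /andP[fe2 m2].
  have := match_no_share Hm m1 m2 ltac:(by rewrite /share_endpoint /= !eqxx /= ?orbT).
  case=> e1 _.
  by move: (face_card fe1) (face_card fe2); rewrite e1; lia.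
have cA : #|[set i | A i]| = \sum_i (A i : nat).
  by rewrite -sum1dep_card big_mkcond /=; apply: eq_bigr => i _; case: (A i).
have cB : #|[set i | B i]| = \sum_i (B i : nat).
  by rewrite -sum1dep_card big_mkcond /=; apply: eq_bigr => i _; case: (B i).
have sub : [set i | B i] \subset (@ordS _) @: [set i | A i].
  apply/subsetP => j; rewrite inE => hj.
  apply/imsetP; exists (ord_pred j); last by rewrite ord_predK.
  by rewrite inE; apply: hBA; rewrite ord_predK.
have eqS : [set i | B i] = (@ordS _) @: [set i | A i].
  apply/eqP; rewrite eqEcard sub /= card_imset; last exact: ordS_inj.
  by rewrite cA cB hsum.
move=> i fe nm.
have : ordS i \in [set i | B i] by rewrite eqS; apply: imset_f; rewrite inE /A fe nm.
by rewrite inE => /andP[].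
Qed.

Lemma arc_mono {u t : {set fedge V}} {p : seq (simplex V)} :
  is_matching K u -> is_matching K t -> u \subset t ->
  cycle (Defs.arc K u) p -> cycle (Defs.arc K t) p.
Proof.
move=> Hu Ht sub cy.
case: p cy => [|x0 q] cy //.
have cy' := cy.
move/(cycle_nthP x0): cy => cy.
apply/(cycle_nthP x0) => i Hi.
have := cy i Hi; rewrite /Defs.arc; case/orP => /andP[fe hm].
- rewrite fe /=; apply/orP; left; apply/negP => xyt.
  have hc := @cycle_cover u (x0 :: q) x0 Hu cy' (Ordinal Hi) fe hm.
  have e := match_no_share Ht xyt (subsetP sub _ hc)
    ltac:(by rewrite /share_endpoint /= !eqxx /= ?orbT).
  by move: hm; rewrite e hc.
- by rewrite fe (subsetP sub _ hm) orbT.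
Qed.

Lemma J_mono {u t : {set fedge V}} :
  is_matching K u -> is_matching K t -> u \subset t -> (J K u <= J K t)%N.
Proof.
move=> Hu Ht sub; apply: subset_leq_card; apply/subsetP => C; rewrite !inE.
case/existsP => n /existsP [tt /and4P[n0 un cy eC]].
apply/existsP; exists n; apply/existsP; exists tt.
by rewrite n0 un eC (arc_mono Hu Ht sub cy).
Qed.

Definition Pr (t s : {set fedge V}) := codim1_face K t s && (J K t == J K s).

Lemma two_faces (u s : {set fedge V}) :
  let T := [set t | Pr u t && Pr t s] in T = set0 \/ #|T| = 2.
Proof.
move=> T.
case: (set_0Vmem T) => [-> | [t0 ht0]]; [by left | right].
move: ht0; rewrite inE /Pr => /andP[/andP[c1 /eqP j1] /andP[c2 /eqP j2]].
move: c1 => /and4P[mt0 mu ut0 /eqP ct0].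
move: c2 => /and4P[ms _ t0s /eqP cs0].
have sus : u \subset s := subset_trans ut0 t0s.
have Hms : is_matching K s by case/andP: ms.
have Hmu : is_matching K u by case/andP: mu.
have -> : T = (fun e => s :\ e) @: (s :\: u).
  apply/setP => t; rewrite inE /Pr; apply/idP/imsetP.
  - case/andP => [/andP[/and4P[mt _ ut /eqP ct] _] /andP[/and4P[_ _ ts /eqP cs] _]].
    have : #|s :\: t| = 1%N by rewrite cardsD (setIidPr ts) cs subSnn.
    move/eqP; case/cards1P => e he.
    have : e \in s :\: t by rewrite he set11.
    rewrite inE => /andP[nt es].
    exists e.
      rewrite inE es andbT; apply: contra nt; exact: (subsetP ut e).
    apply/setP => x; rewrite !inE.
    case: (boolP (x \in t)) => xt.
    + have xs := subsetP ts x xt.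
      apply/esym/andP; split => //; apply/eqP => xe; by rewrite -xe xt in nt.
    + apply/esym/negbTE/negP => /andP[ne xs].
      have : x \in s :\: t by rewrite inE xt xs.
      by rewrite he inE (negbTE ne).
  - case=> e; rewrite inE => /andP[nu es] ->.
    have use : u \subset s :\ e.
      apply/subsetP => x xu; rewrite !inE (subsetP sus x xu) andbT.
      by apply/eqP => xe; rewrite -xe xu in nu.
    have Hse : is_matching K (s :\ e) := sub_matching Hms (subD1set s e).
    have mse : msimplex K (s :\ e).
      rewrite /msimplex Hse /=.
      case/andP: mu => _ /set0Pn [x xu]; apply/set0Pn; exists x.
      exact: (subsetP use).
    have cse : #|s| = (#|s :\ e|).+1 by rewrite (cardsD1 e s) es.
    have J1 := J_mono Hmu Hse use.
    have J2 := J_mono Hse Hms (subD1set s e).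
    have h1 : codim1_face K u (s :\ e).
      apply/and4P; split; [exact: mse | exact: mu | exact: use | apply/eqP].
      by apply: succn_inj; rewrite -cse cs0 ct0.
    have h2 : codim1_face K (s :\ e) s.
      apply/and4P; split; [exact: ms | exact: mse | exact: subD1set | apply/eqP; exact: cse].
    have e1 : J K u == J K (s :\ e).
      by rewrite eqn_leq J1 /= j1 j2.

    have e2 : J K (s :\ e) == J K s.
      by rewrite eqn_leq J2 /= -j2 -j1.

    by rewrite h1 h2 e1 e2.
rewrite card_in_imset; last first.
  move=> e1 e2; rewrite !inE => /andP[_ es1] /andP[_ es2] eq.
  have : e1 \notin s :\ e2 by rewrite -eq !inE eqxx.
  by rewrite !inE es1 andbT negbK => /eqP.
by rewrite cardsD (setIidPr sus) cs0 ct0 -addn2 addKn.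
Qed.

End Proofs.
Arguments Pr {V} K t s.
Arguments two_faces {V} K u s.

Lemma F2_2 (x : 'F_2) : x *+ 2 = 0.
Proof. rewrite -mulr_natr. have -> : (2%:R : 'F_2) = 0 by apply/eqP. by rewrite mulr0. Qed.

Theorem mainTheorem5 (V : finType) (K : {set {set V}}) :
  is_complex K ->
  (forall c : chain V, in_Chat K c -> dJ K (dJ K c) = 0) /\
  (forall (i j : nat) (c : chain V), in_Cij K i.+1 j c -> in_Cij K i j (dJ K c)) /\
  (forall (j : nat) (c : chain V), in_Cij K 0 j c -> dJ K c = 0).
Proof.
move=> _; split; [|split].
- move=> c Hc; apply/ffunP => u; rewrite !ffunE.
  under eq_bigr do rewrite ffunE.
  rewrite (exchange_big_dep xpredT) //=.
  apply: big1 => s _.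
  rewrite (eq_bigl (fun t => t \in [set t | Pr K u t && Pr K t s])); last first.
    by move=> t; rewrite inE.
  rewrite sumr_const.
  case: (two_faces K u s) => h; first by rewrite h cards0.
  rewrite h.
  exact: F2_2.
- move=> i j c Hc t; rewrite ffunE => nz.
  case: (pickP (fun s => (codim1_face K t s && (J K t == J K s)) && (c s != 0))) => [s /andP[/andP[cf /eqP jts] cs] | none]; last first.
    rewrite big1 ?eqxx // in nz => s Ps.
    by move: (none s); rewrite Ps /= => /negbFE/eqP.
  move: (Hc s cs) => /and3P[_ /eqP css /eqP js].
  move: cf => /and4P[_ mt _ /eqP cst].
  by rewrite mt /= jts js eqxx andbT -eqSS -cst css.
- move=> j c Hc; apply/ffunP => t; rewrite !ffunE.
  apply: big1 => s /andP[/and4P[_ mt _ /eqP cs] _].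
  apply/eqP; apply/negPn/negP => nz; move: (Hc s nz) => /and3P[_ /eqP cs1 _].
  move: mt => /andP[_]; rewrite -cards_eq0; apply/negP; apply/negPn.
  by rewrite -eqSS -cs cs1.
Qed.
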